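(* Let $b>0$ and consider the Born–Infeld Lagrangian $L(F,G)=\sqrt{b^4+\tfrac12 b^2F-\tfrac1{16}G^2}-b^2$ on the region where $b^4+\tfrac12b^2F-\tfrac1{16}G^2>0$. Then (i) the quantities $\Omega_1,\Omega_2,\Omega_3$ (formed from $L_F,L_{FF},L_{FG},L_{GG},F,G$ as below) vanish identically on this region; and (ii) for any antisymmetric background $F_{\mu\nu}$ in this region, antisymmetric $f_{\mu\nu}$ and covector $k_\lambda$ satisfying (C) $f_{\mu\nu}k_\lambda+f_{\nu\lambda}k_\mu+f_{\lambda\mu}k_\nu=0$ and (E) $L_F f^{\mu\nu}k_\nu+A F^{\mu\nu}k_\nu+B\tilde F^{\mu\nu}k_\nu=0$ with $A\neq0$, one has $$\Big[\big(b^2+\tfrac12F\big)\eta^{\mu\nu}+F^{\mu}{}_{\lambda}F^{\lambda\nu}\Big]k_\mu k_\nu=0.$$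
   Context: Minkowski metric $\eta_{\mu\nu}=\mathrm{diag}(1,-1,-1,-1)$, indices raised/lowered with $\eta$. $F=F^{\mu\nu}F_{\mu\nu}$, $G=F^{\mu\nu}\tilde F_{\mu\nu}$, with dual $\tilde F_{\alpha\beta}=\tfrac12\eta_{\alpha\beta}{}^{\mu\nu}F_{\mu\nu}$ (Levi-Civita tensor), so that $\tilde F_{\mu\nu}F^{\nu\lambda}=-\tfrac14G\delta_\mu^\lambda$ and $\tilde F_{\mu\lambda}\tilde F^{\lambda\nu}-F_{\mu\lambda}F^{\lambda\nu}=\tfrac12F\delta_\mu^\nu$. Subscripts denote partial derivatives of $L$ evaluated at $(F,G)$. $\xi=F^{\alpha\beta}f_{\alpha\beta}$, $\zeta=\tilde F^{\alpha\beta}f_{\alpha\beta}$, $A=2(\xi L_{FF}+\zeta L_{FG})$, $B=2(\xi L_{FG}+\zeta L_{GG})$. $\Omega_1=-L_FL_{FG}+2FL_{FG}L_{GG}+G(L_{GG}^2-L_{FG}^2)$, $\Omega_2=(L_F+2GL_{FG})(L_{GG}-L_{FF})+2F(L_{FF}L_{GG}+L_{FG}^2)$, $\Omega_3=L_FL_{FG}+2FL_{FF}L_{FG}+G(L_{FG}^2-L_{FF}^2)$. *)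

(* Defs.v *)
From Stdlib Require Import Reals Lra.
From Coquelicot Require Import Coquelicot.
Open Scope R_scope.

Definition BIrad (b x y : R) : R := b ^ 4 + / 2 * b ^ 2 * x - / 16 * y ^ 2.

Definition LBI (b x y : R) : R := sqrt (BIrad b x y) - b ^ 2.

Definition L_F (b x y : R) : R := Derive (fun x' => LBI b x' y) x.
Definition L_FF (b x y : R) : R := Derive (fun x' => L_F b x' y) x.
Definition L_FG (b x y : R) : R := Derive (fun y' => L_F b x y') y.
Definition L_GG (b x y : R) : R :=
  Derive (fun y' => Derive (fun y'' => LBI b x y'') y') y.

Definition Omega1 (b x y : R) : R :=
  - L_F b x y * L_FG b x y + 2 * x * L_FG b x y * L_GG b x y
  + y * (L_GG b x y ^ 2 - L_FG b x y ^ 2).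
Definition Omega2 (b x y : R) : R :=
  (L_F b x y + 2 * y * L_FG b x y) * (L_GG b x y - L_FF b x y)
  + 2 * x * (L_FF b x y * L_GG b x y + L_FG b x y ^ 2).
Definition Omega3 (b x y : R) : R :=
  L_F b x y * L_FG b x y + 2 * x * L_FF b x y * L_FG b x y
  + y * (L_FG b x y ^ 2 - L_FF b x y ^ 2).

Definition sum4 (g : nat -> R) : R := g 0%nat + g 1%nat + g 2%nat + g 3%nat.

(* diagonal Minkowski metric eta = diag(1,-1,-1,-1) (equal to its inverse) *)
Definition eta (m : nat) : R := if Nat.eqb m 0 then 1 else -1.
Definition etaM (m n : nat) : R := if Nat.eqb m n then eta m else 0.

(* a rank-2 tensor is given by its covariant components T_{mu nu} *)
Definition tensor2 := nat -> nat -> R.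

(* raising both indices: T^{mu nu} = eta^{mu a} eta^{nu b} T_{a b} *)
Definition up2 (T : tensor2) : tensor2 := fun m n => eta m * eta n * T m n.

(* Levi-Civita symbol with lower indices, eps_{0123} = +1 (the sign
   convention is irrelevant for the statement);
   for indices in 0..3 this is the sign of the permutation, 0 if repeated. *)
Definition eps (a b c d : nat) : R :=
  (INR b - INR a) * (INR c - INR a) * (INR d - INR a)
  * (INR c - INR b) * (INR d - INR b) * (INR d - INR c) / 12.

Definition dual (T : tensor2) : tensor2 :=
  fun a b => / 2 * sum4 (fun r => sum4 (fun s => eps a b r s * up2 T r s)).

Definition invF (T : tensor2) : R :=
  sum4 (fun m => sum4 (fun n => up2 T m n * T m n)).
Definition invG (T : tensor2) : R :=
  sum4 (fun m => sum4 (fun n => up2 T m n * dual T m n)).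

Definition antisym (T : tensor2) : Prop :=
  forall m n, (m < 4)%nat -> (n < 4)%nat -> T m n = - T n m.

(* Main.v *)
Require Import Defs.
From Stdlib Require Import Reals Lra Lia.
From Coquelicot Require Import Coquelicot.
Open Scope R_scope.

Lemma loc_pos (f : R -> R) x : (forall t, ex_derive f t) -> 0 < f x ->
  locally x (fun t => 0 < f t).
Proof.
  intros Hd Hp.
  assert (Hc : continuity_pt f x).
  { apply continuity_pt_filterlim. exact (@ex_derive_continuous R_AbsRing R_NormedModule f x (Hd x)). }
  apply continuity_pt_locally with (eps := mkposreal _ Hp) in Hc.
  eapply filter_imp; [|exact Hc]. intros t Ht. simpl in Ht.
  apply Rabs_def2 in Ht. lra.
Qed.

Ltac fixsqrt t := repeat match goal with |- context [sqrt ?a] =>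
  lazymatch a with t => fail | _ => replace a with t by (unfold BIrad; ring) end end.


Lemma sq_pos b x y : 0 < BIrad b x y -> 0 < sqrt (BIrad b x y).
Proof. intros; apply sqrt_lt_R0; auto. Qed.

Lemma LF_val b x y : 0 < BIrad b x y -> L_F b x y = b^2 / (4 * sqrt (BIrad b x y)).
Proof.
  intros H. pose proof (sq_pos b x y H). unfold L_F.
  apply is_derive_unique. unfold LBI. unfold BIrad at 1. auto_derive.
  { unfold BIrad in H; lra. }
  fixsqrt (BIrad b x y). field. lra.
Qed.

Ltac sides H := unfold BIrad in H |- *; lra.

Lemma LG_val b x y : 0 < BIrad b x y ->
  Derive (fun y' => LBI b x y') y = - y / (16 * sqrt (BIrad b x y)).
Proof.
  intros H. pose proof (sq_pos b x y H).
  apply is_derive_unique. unfold LBI. unfold BIrad at 1. auto_derive.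
  { unfold BIrad in H; lra. }
  fixsqrt (BIrad b x y). field. lra.
Qed.

Lemma locx b x y : 0 < BIrad b x y -> locally x (fun t => 0 < BIrad b t y).
Proof. intros H. apply loc_pos; auto. intros t; unfold BIrad; auto_derive; auto. Qed.
Lemma locy b x y : 0 < BIrad b x y -> locally y (fun t => 0 < BIrad b x t).
Proof. intros H. apply loc_pos; auto. intros t; unfold BIrad; auto_derive; auto. Qed.

Lemma LFF_val b x y : 0 < BIrad b x y -> L_FF b x y = - b^4 / (16 * sqrt (BIrad b x y) ^ 3).
Proof.
  intros H. pose proof (sq_pos b x y H). unfold L_FF.
  rewrite (Derive_ext_loc _ (fun t => b^2 / (4 * sqrt (BIrad b t y)))).
  2:{ eapply filter_imp; [|exact (locx b x y H)]. intros t Ht. apply LF_val; auto. }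
  apply is_derive_unique. unfold BIrad at 1. auto_derive.
  { repeat split; fixsqrt (BIrad b x y); unfold BIrad in *; lra. }
  fixsqrt (BIrad b x y). field. lra.
Qed.

Lemma LFG_val b x y : 0 < BIrad b x y -> L_FG b x y = b^2 * y / (64 * sqrt (BIrad b x y) ^ 3).
Proof.
  intros H. pose proof (sq_pos b x y H). unfold L_FG.
  rewrite (Derive_ext_loc _ (fun t => b^2 / (4 * sqrt (BIrad b x t)))).
  2:{ eapply filter_imp; [|exact (locy b x y H)]. intros t Ht. apply LF_val; auto. }
  apply is_derive_unique. unfold BIrad at 1. auto_derive.
  { repeat split; fixsqrt (BIrad b x y); unfold BIrad in *; lra. }
  fixsqrt (BIrad b x y). field. lra.
Qed.

Lemma LGG_val b x y : 0 < BIrad b x y ->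
  L_GG b x y = - / (16 * sqrt (BIrad b x y)) - y^2 / (256 * sqrt (BIrad b x y) ^ 3).
Proof.
  intros H. pose proof (sq_pos b x y H). unfold L_GG.
  rewrite (Derive_ext_loc _ (fun t => - t / (16 * sqrt (BIrad b x t)))).
  2:{ eapply filter_imp; [|exact (locy b x y H)]. intros t Ht. apply LG_val; auto. }
  apply is_derive_unique. unfold BIrad at 1. auto_derive.
  { repeat split; fixsqrt (BIrad b x y); unfold BIrad in *; lra. }
  fixsqrt (BIrad b x y). field. lra.
Qed.

Ltac asym T H :=
  let h := fresh in
  assert (h : T 0%nat 0%nat = 0) by (pose proof (H 0%nat 0%nat ltac:(lia) ltac:(lia)); lra); rewrite ?h; clear h;
  assert (h : T 1%nat 1%nat = 0) by (pose proof (H 1%nat 1%nat ltac:(lia) ltac:(lia)); lra); rewrite ?h; clear h;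
  assert (h : T 2%nat 2%nat = 0) by (pose proof (H 2%nat 2%nat ltac:(lia) ltac:(lia)); lra); rewrite ?h; clear h;
  assert (h : T 3%nat 3%nat = 0) by (pose proof (H 3%nat 3%nat ltac:(lia) ltac:(lia)); lra); rewrite ?h; clear h;
  rewrite ?(H 1%nat 0%nat), ?(H 2%nat 0%nat), ?(H 3%nat 0%nat), ?(H 2%nat 1%nat), ?(H 3%nat 1%nat), ?(H 3%nat 2%nat) by lia.

Lemma dual_comp (Fb : tensor2) : antisym Fb ->
  dual Fb 0%nat 1%nat = Fb 2%nat 3%nat /\ dual Fb 0%nat 2%nat = - Fb 1%nat 3%nat /\
  dual Fb 0%nat 3%nat = Fb 1%nat 2%nat /\ dual Fb 1%nat 2%nat = - Fb 0%nat 3%nat /\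
  dual Fb 1%nat 3%nat = Fb 0%nat 2%nat /\ dual Fb 2%nat 3%nat = - Fb 0%nat 1%nat /\
  (forall m, dual Fb m m = 0) /\ (forall m n, dual Fb m n = - dual Fb n m).
Proof. intros H.
 assert (E: forall m n, dual Fb m n = - dual Fb n m).
 { intros m n; unfold dual, sum4, eps, Rdiv; ring. }
 repeat split; try (unfold dual, eps, up2, eta, sum4; cbn [INR Nat.eqb]; asym Fb H; unfold Rdiv; ring).
 all: try exact E.
 all: try exact E.
 all: cycle 6.  intros m; pose proof (E m m); lra.
 all: unfold dual, eps, up2, eta, sum4; cbn [INR Nat.eqb]; asym Fb H; unfold Rdiv; field.
Qed.

Ltac dsub Fb H :=
  let D := fresh in
  destruct (dual_comp Fb H) as (d01 & d02 & d03 & d12 & d13 & d23 & dd & dE);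
  rewrite ?(dE 1%nat 0%nat), ?(dE 2%nat 0%nat), ?(dE 3%nat 0%nat), ?(dE 2%nat 1%nat), ?(dE 3%nat 1%nat), ?(dE 3%nat 2%nat), ?dd;
  rewrite ?d01, ?d02, ?d03, ?d12, ?d13, ?d23; clear d01 d02 d03 d12 d13 d23 dd dE.

Definition Kn (k : nat -> R) := sum4 (fun m => eta m * k m * k m).
Definition Uv (T : tensor2) (k : nat -> R) m := sum4 (fun n => up2 T m n * k n).
Definition dot (u v : nat -> R) := sum4 (fun m => eta m * u m * v m).

Ltac expand := unfold Kn, Uv, dot, invG, invF, up2, etaM, eta, sum4 in *; cbn [Nat.eqb] in *.

Lemma vu_id (Fb : tensor2) (k : nat -> R) : antisym Fb ->
  dot (Uv (dual Fb) k) (Uv Fb k) = / 4 * invG Fb * Kn k.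
Proof. intros H. expand. dsub Fb H. asym Fb H. field. Qed.

Lemma sum4_0 (g : nat -> R) : (forall i, (i < 4)%nat -> g i = 0) -> sum4 g = 0.
Proof. intros H; unfold sum4; rewrite !H; try lia; ring. Qed.

Lemma target_id (Fb : tensor2) (k : nat -> R) (c : R) : antisym Fb ->
  sum4 (fun m => sum4 (fun n =>
        (c * etaM m n
         + sum4 (fun l => up2 Fb m l * eta l * up2 Fb l n)) * k m * k n))
  = c * Kn k - dot (Uv Fb k) (Uv Fb k).
Proof. intros H. expand. asym Fb H. ring. Qed.

Lemma E1 (Fb f : tensor2) (k : nat -> R) (LF A B : R) :
  antisym Fb -> antisym f ->
  (forall m n l, (m < 4)%nat -> (n < 4)%nat -> (l < 4)%nat ->
        f m n * k l + f n l * k m + f l m * k n = 0) ->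
  (forall m, (m < 4)%nat ->
        LF * sum4 (fun n => up2 f m n * k n)
        + A * sum4 (fun n => up2 Fb m n * k n)
        + B * sum4 (fun n => up2 (dual Fb) m n * k n) = 0) ->
  LF * (sum4 (fun a => sum4 (fun c => up2 Fb a c * f a c)) * Kn k / 2)
  + A * dot (Uv Fb k) (Uv Fb k) + B * (/ 4 * invG Fb * Kn k) = 0.
Proof.
  intros HF Hf HC HE.
  set (Cx := fun l m n => f m n * k l + f n l * k m + f l m * k n).
  assert (HC0 : sum4 (fun l => sum4 (fun m => sum4 (fun n =>
     eta l * k l * up2 Fb m n * Cx l m n))) = 0).
  { apply sum4_0; intros l Hl; apply sum4_0; intros m Hm; apply sum4_0; intros n Hn.
    unfold Cx; rewrite HC by lia; ring. }
  assert (HE0 : dot (Uv Fb k) (fun m => LF * Uv f k m + A * Uv Fb k m + B * Uv (dual Fb) k m) = 0).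
  { unfold dot; apply sum4_0; intros m Hm. cbv beta. unfold Uv. rewrite HE by lia. ring. }
  assert (Hwu : dot (Uv Fb k) (Uv f k) =
     sum4 (fun a => sum4 (fun c => up2 Fb a c * f a c)) * Kn k / 2
     - / 2 * sum4 (fun l => sum4 (fun m => sum4 (fun n =>
     eta l * k l * up2 Fb m n * Cx l m n)))).
  { unfold Cx. expand. asym Fb HF. asym f Hf. field. }
  rewrite HC0 in Hwu.
  assert (Hlin : dot (Uv Fb k) (fun m => LF * Uv f k m + A * Uv Fb k m + B * Uv (dual Fb) k m)
     = LF * dot (Uv Fb k) (Uv f k) + A * dot (Uv Fb k) (Uv Fb k) + B * dot (Uv (dual Fb) k) (Uv Fb k)).
  { unfold dot, sum4. ring. }
  rewrite Hlin, Hwu, vu_id in HE0 by exact HF.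
  rewrite <- HE0. ring.
Qed.

Lemma LF_val3 b x y : 0 < BIrad b x y ->
  L_F b x y = b^2 * BIrad b x y / (4 * sqrt (BIrad b x y) ^ 3).
Proof. intros H. pose proof (sq_pos b x y H). rewrite LF_val by auto.
  pose proof (sqrt_sqrt (BIrad b x y) ltac:(lra)) as Hq.
  set (s := sqrt (BIrad b x y)) in *. rewrite <- Hq. field. lra. Qed.

Lemma LGG_val3 b x y : 0 < BIrad b x y ->
  L_GG b x y = - (16 * BIrad b x y + y^2) / (256 * sqrt (BIrad b x y) ^ 3).
Proof. intros H. pose proof (sq_pos b x y H). rewrite LGG_val by auto.
  pose proof (sqrt_sqrt (BIrad b x y) ltac:(lra)) as Hq.
  set (s := sqrt (BIrad b x y)) in *. rewrite <- Hq. field. lra. Qed.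

Theorem mainTheorem4 (b : R) (hb : 0 < b) :
  (forall x y : R, 0 < BIrad b x y ->
     Omega1 b x y = 0 /\ Omega2 b x y = 0 /\ Omega3 b x y = 0)
  /\
  (forall (Fb f : tensor2) (k : nat -> R),
     antisym Fb -> antisym f ->
     0 < BIrad b (invF Fb) (invG Fb) ->
     let x := invF Fb in
     let y := invG Fb in
     let xi := sum4 (fun a => sum4 (fun c => up2 Fb a c * f a c)) in
     let zeta := sum4 (fun a => sum4 (fun c => up2 (dual Fb) a c * f a c)) in
     let A := 2 * (xi * L_FF b x y + zeta * L_FG b x y) in
     let B := 2 * (xi * L_FG b x y + zeta * L_GG b x y) in
     (forall m n l, (m < 4)%nat -> (n < 4)%nat -> (l < 4)%nat ->
        f m n * k l + f n l * k m + f l m * k n = 0) ->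
     (forall m, (m < 4)%nat ->
        L_F b x y * sum4 (fun n => up2 f m n * k n)
        + A * sum4 (fun n => up2 Fb m n * k n)
        + B * sum4 (fun n => up2 (dual Fb) m n * k n) = 0) ->
     A <> 0 ->
     sum4 (fun m => sum4 (fun n =>
        ((b ^ 2 + / 2 * x) * etaM m n
         + sum4 (fun l => up2 Fb m l * eta l * up2 Fb l n)) * k m * k n)) = 0).
Proof.
  split.
  - intros x y H. pose proof (sq_pos b x y H).
    unfold Omega1, Omega2, Omega3.
    rewrite LF_val3, LGG_val3, LFF_val, LFG_val by auto.
    unfold BIrad in *. repeat split; field; lra.
  - intros Fb f k HF Hf HR x y xi zeta A B HC HE HA.
    pose proof (E1 Fb f k (L_F b x y) A B HF Hf HC HE) as H1.
    rewrite target_id by exact HF.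
    fold xi in H1. fold y in H1.
    set (K := Kn k) in *. set (P := dot (Uv Fb k) (Uv Fb k)) in *.
    pose proof (sq_pos b x y HR) as Hs.
    assert (Hkey : L_F b x y * (xi * K / 2) + A * P + B * (/ 4 * y * K)
                   = - ((b ^ 2 + / 2 * x) * K - P) * A).
    { unfold A, B. rewrite LF_val3, LGG_val3, LFF_val, LFG_val by auto.
      unfold BIrad in *. field. lra. }
    rewrite Hkey in H1.
    apply Rmult_integral in H1. destruct H1 as [H1|H1]; [lra|contradiction].
Qed.
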